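(* Let $H$ be a CAT($-1$) space and let $\Phi\in\mathcal{H}$ be such that $\Phi$ and its flip $\hat\Phi$ are Hölder (of some exponent) with Hölder constants at most $L$, and $|\Phi|\leq L$. Then there exists a function $D:\mathbb{R}_{\geq0}\to\mathbb{R}$ such that for any two geodesics $\gamma_1,\gamma_2\in SH$, any $r\geq 0$ and any $t_1,t_2\in\mathbb{R}$ with $d(\gamma_1(0),\gamma_2(0))\leq r$ and $d(\gamma_1(t_1),\gamma_2(t_2))\leq r$, we have $|d^\Phi(\gamma_1(0),\gamma_1(t_1))-d^\Phi(\gamma_2(0),\gamma_2(t_2))|\leq D(r)$.
   Context: $SH$ is the space of unit speed bi-infinite geodesics $\gamma:\mathbb{R}\to H$ with metric $\operatorname{dist}(\gamma_1,\gamma_2)=\frac12\int_{-\infty}^{\infty}d(\gamma_1(t),\gamma_2(t))e^{-|t|}dt$ and geodesic flow $\mathsf g^t\gamma(s)=\gamma(s+t)$; every geodesic segment is assumed to extend to a bi-infinite geodesic. The flip of $\gamma$ is $-\gamma(t)=\gamma(-t)$ and $\hat\Phi(\gamma)=\Phi(-\gamma)$. $\mathcal{H}$ is the set of bounded Hölder functions $\Phi:(SH,\operatorname{dist})\to\mathbb{R}$ with $\Phi(\gamma_1)=\Phi(\gamma_2)$ whenever $\gamma_1|_{[0,\epsilon]}=\gamma_2|_{[0,\epsilon]}$ for some $\epsilon>0$. For $p\neq q$, $d^\Phi(p,q)=\int_0^{d(p,q)}\Phi(\mathsf g^t\gamma_{p,q})dt$ where $\gamma_{p,q}\in SH$ is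 any geodesic with $\gamma_{p,q}(0)=p$, $\gamma_{p,q}(d(p,q))=q$ (and $d^\Phi(p,p)=0$). *)

(* Defs.v *)
From Stdlib Require Import Reals Lra ClassicalEpsilon.
From Coquelicot Require Import Coquelicot.
Open Scope R_scope.

Definition is_metric {X : Type} (d : X -> X -> R) : Prop :=
  (forall x y, 0 <= d x y) /\
  (forall x y, d x y = 0 <-> x = y) /\
  (forall x y, d x y = d y x) /\
  (forall x y z, d x z <= d x y + d y z).

(** The hyperbolic plane H^2 (curvature -1), upper half-plane model:
    points (a,b) with b > 0, distance arcosh(1 + |z-w|^2/(2 Im z Im w)). *)
Definition H2pt := { z : R * R | 0 < snd z }.
Definition arcosh (u : R) : R := ln (u + sqrt (u * u - 1)).
Definition dH2 (z w : H2pt) : R :=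
  let (a, b) := proj1_sig z in
  let (c, e) := proj1_sig w in
  arcosh (1 + ((a - c) ^ 2 + (b - e) ^ 2) / (2 * b * e)).

(** sigma : [0, d a b] -> X is a geodesic segment from a to b
    (parametrized by arc length; values outside [0, d a b] irrelevant). *)
Definition geod_seg {X : Type} (d : X -> X -> R) (sigma : R -> X) (a b : X) : Prop :=
  sigma 0 = a /\ sigma (d a b) = b /\
  forall s t, 0 <= s <= d a b -> 0 <= t <= d a b ->
    d (sigma s) (sigma t) = Rabs (s - t).

Definition geodesic_space {X : Type} (d : X -> X -> R) : Prop :=
  forall a b : X, exists sigma, geod_seg d sigma a b.

(** x lies on the side sigma (from a to b) and x' is its comparison point on the
    side of the comparison triangle from a' to b' in H^2. *)
Definition on_side_cmp {X : Type} (d : X -> X -> R) (sigma : R -> X) (a b : X)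
  (a' b' : H2pt) (x : X) (x' : H2pt) : Prop :=
  exists s, 0 <= s <= d a b /\ x = sigma s /\
    dH2 a' x' = s /\ dH2 x' b' = d a b - s.

Definition CAT_m1 {X : Type} (d : X -> X -> R) : Prop :=
  is_metric d /\ geodesic_space d /\
  forall (p q r : X) (s1 s2 s3 : R -> X),
    geod_seg d s1 p q -> geod_seg d s2 q r -> geod_seg d s3 r p ->
    forall p' q' r' : H2pt,
      dH2 p' q' = d p q -> dH2 q' r' = d q r -> dH2 r' p' = d r p ->
      forall (x y : X) (x' y' : H2pt),
        (on_side_cmp d s1 p q p' q' x x' \/ on_side_cmp d s2 q r q' r' x x' \/
         on_side_cmp d s3 r p r' p' x x') ->
        (on_side_cmp d s1 p q p' q' y y' \/ on_side_cmp d s2 q r q' r' y y' \/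
         on_side_cmp d s3 r p r' p' y y') ->
        d x y <= dH2 x' y'.

Definition inSH {X : Type} (d : X -> X -> R) (g : R -> X) : Prop :=
  forall s t, d (g s) (g t) = Rabs (s - t).

Definition geodesically_complete {X : Type} (d : X -> X -> R) : Prop :=
  forall (sigma : R -> X) (a b : X), geod_seg d sigma a b ->
    exists g, inSH d g /\ forall t, 0 <= t <= d a b -> g t = sigma t.

Definition distSH {X : Type} (d : X -> X -> R) (g1 g2 : R -> X) : R :=
  / 2 * RInt_gen (fun t => d (g1 t) (g2 t) * exp (- Rabs t))
          (Rbar_locally m_infty) (Rbar_locally p_infty).

Definition gflow {X : Type} (t : R) (g : R -> X) : R -> X := fun s => g (s + t).
Definition flip {X : Type} (g : R -> X) : R -> X := fun t => g (- t).
Definition hatPhi {X : Type} (Phi : (R -> X) -> R) : (R -> X) -> R :=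
  fun g => Phi (flip g).

(** x^a for x >= 0, a > 0 (with 0^a = 0). *)
Definition rpow (x a : R) : R := if Rle_dec x 0 then 0 else Rpower x a.

Definition holder_SH {X : Type} (d : X -> X -> R) (Phi : (R -> X) -> R)
  (a C : R) : Prop :=
  forall g1 g2, inSH d g1 -> inSH d g2 ->
    Rabs (Phi g1 - Phi g2) <= C * rpow (distSH d g1 g2) a.

Definition in_calH {X : Type} (d : X -> X -> R) (Phi : (R -> X) -> R) : Prop :=
  (exists M, forall g, inSH d g -> Rabs (Phi g) <= M) /\
  (exists a C, 0 < a <= 1 /\ holder_SH d Phi a C) /\
  (forall g1 g2, inSH d g1 -> inSH d g2 ->
     (exists eps, 0 < eps /\ forall t, 0 <= t <= eps -> g1 t = g2 t) ->
     Phi g1 = Phi g2).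

(** d^Phi(p,q) = int_0^{d(p,q)} Phi(g^t gamma_{p,q}) dt, with gamma_{p,q}
    any geodesic in SH with gamma(0)=p, gamma(d(p,q))=q (chosen by epsilon). *)
Definition gamma_pq {X : Type} (d : X -> X -> R) (p q : X) : R -> X :=
  epsilon (inhabits (fun _ : R => p))
    (fun g => inSH d g /\ g 0 = p /\ g (d p q) = q).

Definition dPhi {X : Type} (d : X -> X -> R) (Phi : (R -> X) -> R) (p q : X) : R :=
  match excluded_middle_informative (p = q) with
  | left _ => 0
  | right _ => RInt (fun t => Phi (gflow t (gamma_pq d p q))) 0 (d p q)
  end.

(* Main.v *)
Require Import Defs.
From Stdlib Require Import Reals Lra Psatz ClassicalEpsilon FunctionalExtensionality.
From Coquelicot Require Import Coquelicot.
Open Scope R_scope.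

Lemma cosh_sinh_sq t : cosh t * cosh t = 1 + sinh t * sinh t.
Proof. unfold cosh, sinh. assert (exp t * exp (-t) = 1).
  rewrite <- exp_plus. replace (t + - t) with 0 by ring. apply exp_0. nra. Qed.

Lemma cosh_minus_sinh t : cosh t - sinh t = exp (- t).
Proof. unfold cosh, sinh. field. Qed.
Lemma cosh_plus_sinh t : cosh t + sinh t = exp t.
Proof. unfold cosh, sinh. field. Qed.

Lemma cosh_sub x y : cosh (x - y) = cosh x * cosh y - sinh x * sinh y.
Proof. unfold cosh, sinh. replace (- (x - y)) with (-x + y) by ring.
  unfold Rminus. rewrite !exp_plus. 
  assert (exp y * exp (-y) = 1). rewrite <- exp_plus. replace (y + - y) with 0 by ring. apply exp_0.
  assert (exp x * exp (-x) = 1). rewrite <- exp_plus. replace (x + - x) with 0 by ring. apply exp_0.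
  replace (exp (- y)) with (/ exp y). field. apply Rgt_not_eq, exp_pos.
  rewrite exp_Ropp. auto. Qed.

Lemma cosh_add x y : cosh (x + y) = cosh x * cosh y + sinh x * sinh y.
Proof. replace (x + y) with (x - - y) by ring. rewrite cosh_sub.
  unfold cosh, sinh. rewrite Ropp_involutive. field. Qed.

Lemma sinh_nonneg t : 0 <= t -> 0 <= sinh t.
Proof. intros H. destruct (Req_dec t 0). subst; rewrite sinh_0; lra.
  left. rewrite <- sinh_0. apply sinh_lt. lra. Qed.

Lemma sinh_pos t : 0 < t -> 0 < sinh t.
Proof. intros H. rewrite <- sinh_0. apply sinh_lt. lra. Qed.

Lemma cosh_ge1 t : 1 <= cosh t.
Proof. pose proof (cosh_sinh_sq t). assert (0 < cosh t).
  unfold cosh. pose proof (exp_pos t); pose proof (exp_pos (-t)). lra. nra. Qed.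

Lemma cosh_abs_gt t : Rabs (sinh t) < cosh t.
Proof. unfold cosh, sinh. pose proof (exp_pos t); pose proof (exp_pos (-t)).
  apply Rabs_def1; lra. Qed.

Lemma cosh_even t : cosh (- t) = cosh t.
Proof. unfold cosh. rewrite Ropp_involutive. lra. Qed.

Lemma cosh_mono x y : 0 <= x <= y -> cosh x <= cosh y.
Proof. intros H. replace y with (x + (y - x)) by ring. rewrite cosh_add.
  pose proof (cosh_ge1 (y-x)). pose proof (sinh_nonneg x). pose proof (sinh_nonneg (y - x)).
  pose proof (cosh_ge1 x). nra. Qed.

Lemma cosh_mono_abs x y : Rabs x <= Rabs y -> cosh x <= cosh y.
Proof. intros H. assert (forall z, cosh z = cosh (Rabs z)).
  intros z. unfold Rabs. destruct (Rcase_abs z). rewrite cosh_even; auto. auto.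
  rewrite (H0 x), (H0 y). apply cosh_mono. split; auto. apply Rabs_pos. Qed.

Lemma arcosh_cosh t : 0 <= t -> arcosh (cosh t) = t.
Proof. intros H. unfold arcosh. rewrite cosh_sinh_sq.
  replace (1 + sinh t * sinh t - 1) with (sinh t * sinh t) by ring.
  rewrite sqrt_square by (apply sinh_nonneg; auto).
  rewrite cosh_plus_sinh. apply ln_exp. Qed.

Lemma arcosh_bound x A : 0 <= x <= A ->
  arcosh (1 + x) <= sqrt x * (sqrt A + sqrt (A + 2)).
Proof. intros H. unfold arcosh.
  assert (E: (1 + x) * (1 + x) - 1 = x * (x + 2)) by ring. rewrite E.
  rewrite sqrt_mult by lra.
  pose proof (exp_ineq1_le (ln (1 + x + sqrt x * sqrt (x + 2)))).
  rewrite exp_ln in H0.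
  2:{ pose proof (sqrt_pos x); pose proof (sqrt_pos (x+2)). nra. }
  assert (x <= sqrt x * sqrt A).
  { rewrite <- (sqrt_sqrt x) at 1 by lra. apply Rmult_le_compat_l. apply sqrt_pos.
    apply sqrt_le_1_alt. lra. }
  assert (sqrt (x + 2) <= sqrt (A + 2)) by (apply sqrt_le_1_alt; lra).
  pose proof (sqrt_pos x). nra. Qed.

Lemma sinh_ratio v T : 0 <= v <= T -> sinh v <= exp (v - T) * sinh T.
Proof. intros H. unfold sinh. replace (exp (v - T)) with (exp v * exp (-T)) by (rewrite <- exp_plus; f_equal; ring).
  assert (exp v * exp (-v) = 1). rewrite <- exp_plus. replace (v + - v) with 0 by ring. apply exp_0.
  assert (exp T * exp (-T) = 1). rewrite <- exp_plus. replace (T + - T) with 0 by ring. apply exp_0.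
  assert (exp (-T) <= exp (-v)). destruct (Req_dec v T). subst; lra. left; apply exp_increasing; lra.
  assert (exp (-T) * (exp v * exp (-v)) <= exp (-v) * (exp v * exp (-v))).
  apply Rmult_le_compat_r. lra. auto.
  pose proof (exp_pos v). pose proof (exp_pos (-v)). pose proof (exp_pos T). pose proof (exp_pos (-T)).
  nra. Qed.
Lemma alg_id a1 b1 c1 s1 a2 b2 c2 s2 : b1*b1 = 1 + a1*a1 -> b2*b2=1+a2*a2 ->
  c1*c1+s1*s1=1 -> c2*c2+s2*s2=1 -> 0 < b1 - a1*c1 -> 0 < b2 - a2*c2 ->
  1 + ((a1*s1/(b1-a1*c1) - a2*s2/(b2-a2*c2))^2 + (/(b1-a1*c1) - /(b2-a2*c2))^2)
      /(2 * /(b1-a1*c1) * /(b2-a2*c2))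
  = b1*b2 - a1*a2*(c1*c2+s1*s2).
Proof. intros h1 h2 h3 h4 p1 p2.
  set (D1 := b1 - a1*c1) in *. set (D2 := b2 - a2*c2) in *.
  replace (1 + ((a1*s1/D1 - a2*s2/D2)^2 + (/D1 - /D2)^2) /(2 * /D1 * /D2))
   with (1 + ((a1*s1*D2 - a2*s2*D1)^2 + (D2 - D1)^2)/(2*D1*D2)) by (field; lra).
  assert (k1: a1*a1*(s1*s1) + 1 = D1 * (b1 + a1*c1)).
  { replace (s1*s1) with (1 - c1*c1) by lra. unfold D1. nra. }
  assert (k2: a2*a2*(s2*s2) + 1 = D2 * (b2 + a2*c2)).
  { replace (s2*s2) with (1 - c2*c2) by lra. unfold D2. nra. }
  assert (N: (a1*s1*D2 - a2*s2*D1)^2 + (D2 - D1)^2 =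
     D2*D2*(a1*a1*(s1*s1) + 1) + D1*D1*(a2*a2*(s2*s2)+1) - 2*a1*a2*s1*s2*D1*D2 - 2*D1*D2) by ring.
  rewrite N, k1, k2. unfold D1, D2 in *. field. split; lra.
Qed.

Definition Dn t c := cosh t - sinh t * c.
Lemma Dn_pos t c : -1 <= c <= 1 -> 0 < Dn t c.
Proof. intros H. unfold Dn. pose proof (cosh_abs_gt t).
  assert (sinh t * c <= Rabs (sinh t)).
  { destruct (Rle_dec 0 (sinh t)). rewrite Rabs_right by lra. nra.
    rewrite Rabs_left by lra. nra. } lra. Qed.

Definition mkpt (t c s : R) (H : -1 <= c <= 1) : H2pt :=
  exist (fun z : R * R => 0 < snd z) (sinh t * s / Dn t c, / Dn t c)
        (Rinv_0_lt_compat _ (Dn_pos t c H)).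

Lemma dH2_mkpt t1 c1 s1 H1 t2 c2 s2 H2 : c1*c1+s1*s1=1 -> c2*c2+s2*s2=1 ->
  dH2 (mkpt t1 c1 s1 H1) (mkpt t2 c2 s2 H2) =
  arcosh (cosh t1 * cosh t2 - sinh t1 * sinh t2 * (c1*c2+s1*s2)).
Proof. intros e1 e2. unfold dH2, mkpt. simpl. f_equal.
  pose proof (Dn_pos t1 c1 H1). pose proof (Dn_pos t2 c2 H2). unfold Dn in *.
  replace (2 * / (cosh t1 - sinh t1 * c1) * / (cosh t2 - sinh t2 * c2)) with
    (2 * / (cosh t1 - sinh t1 * c1) * / (cosh t2 - sinh t2 * c2)) by ring.
  unfold Rdiv at 1 2. rewrite <- !Rdiv_def.
  apply alg_id; auto using cosh_sinh_sq. Qed.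

Definition Cg (r : R) := sqrt (cosh r - 1) * (sqrt (cosh r - 1) + sqrt (cosh r - 1 + 2)).

Lemma Cg_nonneg r : 0 <= Cg r.
Proof. unfold Cg. pose proof (sqrt_pos (cosh r - 1)). pose proof (sqrt_pos (cosh r - 1 + 2)). nra. Qed.

Lemma seg_rev {X} (d : X -> X -> R) s a b : is_metric d -> geod_seg d s a b ->
  geod_seg d (fun t => s (d a b - t)) b a.
Proof. intros [m1 [m2 [m3 m4]]] [g1 [g2 g3]]. unfold geod_seg. rewrite (m3 b a). split; [|split].
  - replace (d a b - 0) with (d a b) by ring. auto.
  - replace (d a b - d a b) with 0 by ring. auto.
  - intros x y hx hy. rewrite g3 by lra. replace (d a b - x - (d a b - y)) with (-(x-y)) by ring. apply Rabs_Ropp. Qed.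

Lemma GL {X} (d : X -> X -> R) : CAT_m1 d -> forall p x1 x2 s1 s2 r v,
  geod_seg d s1 p x1 -> geod_seg d s2 p x2 -> d x1 x2 <= r -> 0 <= v ->
  v <= d p x1 -> v <= d p x2 ->
  d (s1 v) (s2 v) <= Cg r * exp (v - (d p x1 + d p x2)/2).
Proof.
  intros HC p x1 x2 s1 s2 r v G1 G2 Hr Hv V1 V2.
  pose proof HC as [HM [HG HT]]. pose proof HM as [m1 [m2 [m3 m4]]].
  set (T1 := d p x1) in *. set (T2 := d p x2) in *. set (c := d x1 x2) in *.
  pose proof (Cg_nonneg r). pose proof (exp_pos (v - (T1 + T2)/2)).
  assert (0 <= T1) by apply m1. assert (0 <= T2) by apply m1. assert (0 <= c) by apply m1.
  destruct (Req_dec T1 0) as [E|E].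
  { assert (v = 0) by lra. subst v. destruct G1 as [a1 _]. destruct G2 as [a2 _].
    rewrite a1, a2. assert (d p p = 0) by (apply m2; auto). nra. }
  destruct (Req_dec T2 0) as [E'|E'].
  { assert (v = 0) by lra. subst v. destruct G1 as [a1 _]. destruct G2 as [a2 _].
    rewrite a1, a2. assert (d p p = 0) by (apply m2; auto). nra. }
  assert (P1: 0 < sinh T1) by (apply sinh_pos; lra).
  assert (P2: 0 < sinh T2) by (apply sinh_pos; lra).
  set (k := (cosh T1 * cosh T2 - cosh c) / (sinh T1 * sinh T2)).
  assert (Hk : -1 <= k <= 1).
  { assert (c <= T1 + T2). { unfold c, T1, T2. rewrite (m3 p x1). apply m4. }
    assert (Rabs (T1 - T2) <= c).
    { unfold c, T1, T2. apply Rabs_le. split.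
      - pose proof (m4 p x1 x2) as q1. lra.
      - pose proof (m4 p x2 x1) as q2. rewrite (m3 x2 x1) in q2. lra. }
    assert (Q5: cosh c <= cosh (T1 + T2)) by (apply cosh_mono; lra).
    assert (Q6: cosh (T1 - T2) <= cosh c).
    { apply cosh_mono_abs. rewrite (Rabs_right c); lra. }
    rewrite cosh_add in Q5. rewrite cosh_sub in Q6.
    unfold k. split.
    - apply Rmult_le_reg_r with (sinh T1 * sinh T2). nra.
      unfold Rdiv. rewrite Rmult_assoc, Rinv_l by nra. lra.
    - apply Rmult_le_reg_r with (sinh T1 * sinh T2). nra.
      unfold Rdiv. rewrite Rmult_assoc, Rinv_l by nra. lra. }
  set (sk := sqrt (1 - k*k)).
  assert (Hsk : k*k + sk*sk = 1). { unfold sk. rewrite sqrt_sqrt by nra. ring. }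
  assert (H10 : -1 <= 1 <= 1) by lra.
  assert (e10 : 1*1 + 0*0 = 1) by ring.
  set (P' := mkpt 0 1 0 H10). set (Q' := mkpt T1 1 0 H10). set (R' := mkpt T2 k sk Hk).
  set (X' := mkpt v 1 0 H10). set (Y' := mkpt v k sk Hk).
  destruct (HG x1 x2) as [s12 G12].
  pose proof (seg_rev d s2 p x2 HM G2) as G3. fold T2 in G3.
  assert (dPQ : dH2 P' Q' = d p x1).
  { unfold P', Q'. rewrite dH2_mkpt by auto. rewrite cosh_0, sinh_0.
    replace (1 * cosh T1 - 0 * sinh T1 * (1 * 1 + 0 * 0)) with (cosh T1) by ring.
    apply arcosh_cosh; unfold T1, T2, c in *; lra. }
  assert (dQR : dH2 Q' R' = d x1 x2).
  { unfold Q', R'. rewrite dH2_mkpt by auto.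
    replace (cosh T1 * cosh T2 - sinh T1 * sinh T2 * (1 * k + 0 * sk)) with (cosh c).
    apply arcosh_cosh; unfold T1, T2, c in *; lra. unfold k. field; try split; lra. }
  assert (dRP : dH2 R' P' = d x2 p).
  { unfold R', P'. rewrite dH2_mkpt by auto. rewrite cosh_0, sinh_0, (m3 x2 p). fold T2.
    replace (cosh T2 * 1 - sinh T2 * 0 * (k * 1 + sk * 0)) with (cosh T2) by ring.
    apply arcosh_cosh; unfold T1, T2, c in *; lra. }
  assert (HX : on_side_cmp d s1 p x1 P' Q' (s1 v) X').
  { exists v. split. fold T1; lra. split. auto. split.
    - unfold P', X'. rewrite dH2_mkpt by auto. rewrite cosh_0, sinh_0.
      replace (1 * cosh v - 0 * sinh v * (1 * 1 + 0 * 0)) with (cosh v) by ring.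
      apply arcosh_cosh; unfold T1, T2, c in *; lra.
    - unfold X', Q'. rewrite dH2_mkpt by auto.
      replace (cosh v * cosh T1 - sinh v * sinh T1 * (1 * 1 + 0 * 0)) with (cosh (T1 - v))
        by (rewrite cosh_sub; ring).
      apply arcosh_cosh; unfold T1, T2, c in *; lra. }
  assert (HY : on_side_cmp d (fun t => s2 (T2 - t)) x2 p R' P' (s2 v) Y').
  { exists (T2 - v). rewrite (m3 x2 p). fold T2. split. lra. split.
    f_equal; ring. split.
    - unfold R', Y'. rewrite dH2_mkpt by auto.
      replace (cosh T2 * cosh v - sinh T2 * sinh v * (k * k + sk * sk)) with (cosh (T2 - v))
        by (rewrite cosh_sub, Hsk; ring).
      apply arcosh_cosh; unfold T1, T2, c in *; lra.
    - unfold Y', P'. rewrite dH2_mkpt by auto. rewrite cosh_0, sinh_0.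
      replace (cosh v * 1 - sinh v * 0 * (k * 1 + sk * 0)) with (cosh v) by ring.
      replace (T2 - (T2 - v)) with v by ring.
      apply arcosh_cosh; unfold T1, T2, c in *; lra. }
  pose proof (HT p x1 x2 s1 s12 (fun t => s2 (T2 - t)) G1 G12 G3 P' Q' R' dPQ dQR dRP
     (s1 v) (s2 v) X' Y' (or_introl HX) (or_intror (or_intror HY))) as Hcmp.
  unfold X', Y' in Hcmp. rewrite dH2_mkpt in Hcmp by auto.
  set (A := cosh r - 1).
  set (x := sinh v * sinh v * (1 - k)).
  replace (cosh v * cosh v - sinh v * sinh v * (1 * k + 0 * sk)) with (1 + x) in Hcmp
    by (unfold x; rewrite cosh_sinh_sq; ring).
  assert (Hx0 : 0 <= x). { unfold x. pose proof (sinh_nonneg v Hv). nra. }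
  assert (H1k : 1 - k <= A / (sinh T1 * sinh T2)).
  { unfold k, A. assert (cosh c <= cosh r) by (apply cosh_mono; lra).
    pose proof (cosh_ge1 (T1 - T2)) as Q5. rewrite cosh_sub in Q5.
    apply Rmult_le_reg_r with (sinh T1 * sinh T2). nra.
    unfold Rdiv. rewrite Rmult_assoc, Rinv_l by nra.
    replace ((1 - (cosh T1 * cosh T2 - cosh c) * / (sinh T1 * sinh T2)) * (sinh T1 * sinh T2))
      with (sinh T1 * sinh T2 - (cosh T1 * cosh T2 - cosh c)) by (field; lra). lra. }
  set (Ee := exp (v - T1) * exp (v - T2)).
  assert (HxA : x <= A * Ee).
  { pose proof (sinh_ratio v T1 (conj Hv V1)). pose proof (sinh_ratio v T2 (conj Hv V2)).
    pose proof (sinh_nonneg v Hv).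
    assert (sinh v * sinh v <= Ee * (sinh T1 * sinh T2)).
    { unfold Ee. pose proof (exp_pos (v - T1)); pose proof (exp_pos (v - T2)).
      apply Rle_trans with ((exp (v - T1) * sinh T1) * (exp (v - T2) * sinh T2)).
      apply Rmult_le_compat; lra. nra. }
    unfold x. assert (0 <= 1 - k) by lra.
    apply Rle_trans with (Ee * (sinh T1 * sinh T2) * (A / (sinh T1 * sinh T2))).
    apply Rmult_le_compat; nra.
    right. field. split; lra. }
  assert (HEe1 : Ee <= 1).
  { unfold Ee. rewrite <- exp_plus. rewrite <- exp_0. 
    destruct (Req_dec (v - T1 + (v - T2)) 0) as [z|z]. rewrite z; lra.
    left. apply exp_increasing. lra. }
  assert (HA0 : 0 <= A) by (unfold A; pose proof (cosh_ge1 r); lra).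
  assert (HxA' : x <= A) by nra.
  pose proof (arcosh_bound x A (conj Hx0 HxA')) as Hb.
  assert (Hsq : sqrt x <= sqrt A * exp (v - (T1 + T2)/2)).
  { assert (Q5: Ee = exp (v - (T1 + T2)/2) * exp (v - (T1 + T2)/2)).
    { unfold Ee. rewrite <- !exp_plus. f_equal. field. }
    rewrite <- (sqrt_square (exp (v - (T1 + T2) / 2))) by lra.
    rewrite <- sqrt_mult_alt by lra. rewrite <- Q5. apply sqrt_le_1_alt. auto. }
  unfold Cg. fold A.
  pose proof (sqrt_pos A). pose proof (sqrt_pos (A+2)). pose proof (sqrt_pos x).
  apply Rle_trans with (sqrt x * (sqrt A + sqrt (A + 2))). lra.
  replace (sqrt A * (sqrt A + sqrt (A + 2)) * exp (v - (T1 + T2) / 2)) with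
    (sqrt A * exp (v - (T1 + T2) / 2) * (sqrt A + sqrt (A + 2))) by ring.
  apply Rmult_le_compat_r; lra.
Qed.

Lemma lip_cont (f : R -> R) K x : 0 <= K ->
  (forall y, Rabs (f y - f x) <= K * Rabs (y - x)) -> continuous f x.
Proof. intros HK H. apply filterlim_locally. intros eps.
  assert (hp : 0 < eps / (K + 1)) by (apply Rdiv_lt_0_compat; [apply cond_pos | lra]).
  exists (mkposreal _ hp). intros y Hy.
  change (Rabs (y - x) < eps / (K + 1)) in Hy. change (Rabs (f y - f x) < eps).
  pose proof (H y). pose proof (Rabs_pos (y - x)). pose proof (cond_pos eps).
  apply Rle_lt_trans with (K * Rabs (y - x)). auto.
  apply Rle_lt_trans with ((K+1) * Rabs (y - x)). nra.
  apply Rmult_lt_reg_r with (/ (K+1)). apply Rinv_0_lt_compat; lra.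
  replace ((K + 1) * Rabs (y - x) * / (K + 1)) with (Rabs (y - x)) by (field; lra). auto. Qed.

Lemma is_RInt_expneg S x y :
  is_RInt (fun u => S * exp (- u / 2)) x y (2 * S * (exp (- x / 2) - exp (- y / 2))).
Proof.
  pose proof (is_RInt_derive (fun u => -2 * S * exp (- u / 2)) (fun u => S * exp (- u / 2)) x y) as H.
  assert (E: minus (-2 * S * exp (- y / 2)) (-2 * S * exp (- x / 2)) = 2 * S * (exp (- x / 2) - exp (- y / 2)))
    by (unfold minus, plus, opp; simpl; ring).
  rewrite <- E. apply H.
  - intros u _. auto_derive. auto. unfold Rdiv. field.
  - intros u _. apply (ex_derive_continuous (fun u => S * exp (- u / 2))). auto_derive. auto.
Qed.

Lemma is_RInt_exppos S x y :
  is_RInt (fun u => S * exp (u / 2)) x y (2 * S * (exp (y / 2) - exp (x / 2))).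
Proof.
  pose proof (is_RInt_derive (fun u => 2 * S * exp (u / 2)) (fun u => S * exp (u / 2)) x y) as H.
  assert (E: minus (2 * S * exp (y / 2)) (2 * S * exp (x / 2)) = 2 * S * (exp (y / 2) - exp (x / 2)))
    by (unfold minus, plus, opp; simpl; ring).
  rewrite <- E. apply H.
  - intros u _. auto_derive. auto. unfold Rdiv. field.
  - intros u _. apply (ex_derive_continuous (fun u => S * exp (u / 2))). auto_derive. auto.
Qed.


Lemma h_ex (h : R -> R) (S : R) (hc : forall u, continuous h u) (h0 : forall u, 0 <= h u) (hS : forall u, h u <= S * exp (- Rabs u / 2)) a b : ex_RInt h a b.
Proof. apply (@ex_RInt_continuous R_CompleteNormedModule). intros; apply hc. Qed.

Lemma S_nonneg (h : R -> R) (S : R) (hc : forall u, continuous h u) (h0 : forall u, 0 <= h u) (hS : forall u, h u <= S * exp (- Rabs u / 2)) : 0 <= S.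
Proof. pose proof (hS 0). pose proof (h0 0). pose proof (exp_pos (- Rabs 0 / 2)). nra. Qed.



Lemma RInt_h_nonneg (h : R -> R) (S : R) (hc : forall u, continuous h u) (h0 : forall u, 0 <= h u) (hS : forall u, h u <= S * exp (- Rabs u / 2)) a b : a <= b -> 0 <= RInt h a b.
Proof. intros. apply RInt_ge_0; auto. apply (h_ex h S hc h0 hS). Qed.

Lemma tail_pos (h : R -> R) (S : R) (hc : forall u, continuous h u) (h0 : forall u, 0 <= h u) (hS : forall u, h u <= S * exp (- Rabs u / 2)) x y : 0 <= x <= y -> RInt h x y <= 2 * S * exp (- x / 2).
Proof. intros H. apply Rle_trans with (2 * S * (exp (- x / 2) - exp (- y / 2))).
  rewrite <- (is_RInt_unique _ _ _ _ (is_RInt_expneg S x y)).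
  apply RInt_le. lra. apply (h_ex h S hc h0 hS). eexists; apply is_RInt_expneg.
  intros u Hu. rewrite <- (Rabs_right u) at 2 by lra. replace (- u / 2) with (- Rabs u / 2).
  apply hS. rewrite Rabs_right by lra. auto.
  pose proof (S_nonneg h S hc h0 hS). pose proof (exp_pos (- y / 2)). nra. Qed.

Lemma tail_neg (h : R -> R) (S : R) (hc : forall u, continuous h u) (h0 : forall u, 0 <= h u) (hS : forall u, h u <= S * exp (- Rabs u / 2)) x y : x <= y <= 0 -> RInt h x y <= 2 * S * exp (y / 2).
Proof. intros H. apply Rle_trans with (2 * S * (exp (y / 2) - exp (x / 2))).
  rewrite <- (is_RInt_unique _ _ _ _ (is_RInt_exppos S x y)).
  apply RInt_le. lra. apply (h_ex h S hc h0 hS). eexists; apply is_RInt_exppos.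
  intros u Hu. replace (u / 2) with (- Rabs u / 2). apply hS.
  rewrite Rabs_left by lra. field.
  pose proof (S_nonneg h S hc h0 hS). pose proof (exp_pos (x / 2)). nra. Qed.


Lemma abs_RInt_swap (h : R -> R) (S : R) (hc : forall u, continuous h u) (h0 : forall u, 0 <= h u) (hS : forall u, h u <= S * exp (- Rabs u / 2)) a b : Rabs (RInt h b a) = Rabs (RInt h a b).
Proof. rewrite <- opp_RInt_swap by apply (h_ex h S hc h0 hS). unfold opp; simpl. apply Rabs_Ropp. Qed.

Lemma tail_abs_pos (h : R -> R) (S : R) (hc : forall u, continuous h u) (h0 : forall u, 0 <= h u) (hS : forall u, h u <= S * exp (- Rabs u / 2)) M x y : 0 <= M -> M <= x -> M <= y -> Rabs (RInt h x y) <= 2 * S * exp (- M / 2).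
Proof. intros HM Hx Hy. pose proof (S_nonneg h S hc h0 hS).
  assert (forall a b, M <= a <= b -> Rabs (RInt h a b) <= 2 * S * exp (- M / 2)).
  { intros a b Hab. rewrite Rabs_right by (apply Rle_ge, (RInt_h_nonneg h S hc h0 hS); lra).
    apply Rle_trans with (2 * S * exp (- a / 2)). apply (tail_pos h S hc h0 hS); lra.
    apply Rmult_le_compat_l. lra. destruct (Req_dec a M). subst; lra.
    left; apply exp_increasing; lra. }
  destruct (Rle_dec x y). apply H0; lra. rewrite <- (abs_RInt_swap h S hc h0 hS). apply H0; lra. Qed.

Lemma tail_abs_neg (h : R -> R) (S : R) (hc : forall u, continuous h u) (h0 : forall u, 0 <= h u) (hS : forall u, h u <= S * exp (- Rabs u / 2)) M x y : 0 <= M -> x <= - M -> y <= - M -> Rabs (RInt h x y) <= 2 * S * exp (- M / 2).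
Proof. intros HM Hx Hy. pose proof (S_nonneg h S hc h0 hS).
  assert (forall a b, a <= b <= - M -> Rabs (RInt h a b) <= 2 * S * exp (- M / 2)).
  { intros a b Hab. rewrite Rabs_right by (apply Rle_ge, (RInt_h_nonneg h S hc h0 hS); lra).
    apply Rle_trans with (2 * S * exp (b / 2)). apply (tail_neg h S hc h0 hS); lra.
    apply Rmult_le_compat_l. lra. destruct (Req_dec b (- M)). subst. right; f_equal; field.
    left; apply exp_increasing; lra. }
  destruct (Rle_dec x y). apply H0; lra. rewrite <- (abs_RInt_swap h S hc h0 hS). apply H0; lra. Qed.

Lemma mid_bound (h : R -> R) (S : R) (hc : forall u, continuous h u) (h0 : forall u, 0 <= h u) (hS : forall u, h u <= S * exp (- Rabs u / 2)) a b : a <= 0 -> 0 <= b -> RInt h a b <= 4 * S.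
Proof. intros Ha Hb. rewrite <- (RInt_Chasles h a 0 b) by apply (h_ex h S hc h0 hS).
  unfold plus; simpl.
  pose proof ((tail_neg h S hc h0 hS) a 0 (conj Ha (Rle_refl 0))). pose proof ((tail_pos h S hc h0 hS) 0 b (conj (Rle_refl 0) Hb)).
  replace (0/2) with 0 in H by field. replace (-0/2) with 0 in H0 by field.
  rewrite exp_0 in H, H0. lra. Qed.

Lemma small_exp (h : R -> R) (S : R) (hc : forall u, continuous h u) (h0 : forall u, 0 <= h u) (hS : forall u, h u <= S * exp (- Rabs u / 2)) eps : 0 < eps -> exists M, 0 <= M /\ 4 * S * exp (- M / 2) < eps.
Proof. intros He. pose proof (S_nonneg h S hc h0 hS). set (q := eps / (4 * S + 1)).
  assert (0 < q) by (unfold q; apply Rdiv_lt_0_compat; lra).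
  exists (2 * Rabs (ln q)). split. pose proof (Rabs_pos (ln q)); lra.
  replace (- (2 * Rabs (ln q)) / 2) with (- Rabs (ln q)) by field.
  assert (exp (- Rabs (ln q)) <= q).
  { destruct (Rle_dec 0 (ln q)). rewrite Rabs_right by lra.
    apply Rle_trans with 1. rewrite <- exp_0. destruct (Req_dec (ln q) 0). rewrite H1; rewrite Ropp_0; lra.
    left; apply exp_increasing; lra. rewrite <- (exp_ln q) by auto. rewrite <- exp_0.
    destruct (Req_dec (ln q) 0). rewrite H1; lra. left; apply exp_increasing; lra.
    rewrite Rabs_left by lra. rewrite Ropp_involutive, exp_ln; lra. }
  apply Rle_lt_trans with (4 * S * q). apply Rmult_le_compat_l; lra.
  unfold q. apply Rmult_lt_reg_r with (4 * S + 1). lra.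
  replace (4 * S * (eps / (4 * S + 1)) * (4 * S + 1)) with (4 * S * eps) by (field; lra). nra. Qed.

Lemma imp_exists (h : R -> R) (S : R) (hc : forall u, continuous h u) (h0 : forall u, 0 <= h u) (hS : forall u, h u <= S * exp (- Rabs u / 2)) : exists l, is_RInt_gen h (Rbar_locally m_infty) (Rbar_locally p_infty) l /\ l <= 4 * S.
Proof.
  pose proof (S_nonneg h S hc h0 hS).
  assert (Hc : exists l : R, filterlim (fun ab : R * R => RInt h (fst ab) (snd ab))
             (filter_prod (Rbar_locally m_infty) (Rbar_locally p_infty)) (locally l)).
  { apply (filterlim_locally_cauchy (U := R_CompleteSpace)). intros eps.
    destruct ((small_exp h S hc h0 hS) eps (cond_pos eps)) as [M [HM HMe]].
    exists (fun ab : R * R => fst ab < - M /\ M < snd ab). split.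
    - apply (Filter_prod _ _ _ (fun x => x < - M) (fun y => M < y)).
      exists (- M). auto. exists M. auto. intros x y Hx Hy. simpl. auto.
    - intros [a b] [a' b'] [Ha Hb] [Ha' Hb']. simpl in *.
      change (Rabs (RInt h a' b' - RInt h a b) < eps).
      rewrite <- (RInt_Chasles h a' a b') by apply (h_ex h S hc h0 hS).
      rewrite <- (RInt_Chasles h a b b') by apply (h_ex h S hc h0 hS). unfold plus; simpl.
      replace (RInt h a' a + (RInt h a b + RInt h b b') - RInt h a b) with (RInt h a' a + RInt h b b') by ring.
      eapply Rle_lt_trans. apply Rabs_triang.
      pose proof ((tail_abs_neg h S hc h0 hS) M a' a HM ltac:(lra) ltac:(lra)).
      pose proof ((tail_abs_pos h S hc h0 hS) M b b' HM ltac:(lra) ltac:(lra)). lra. }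
  destruct Hc as [l Hl]. exists l. split.
  - unfold is_RInt_gen. eapply filterlimi_lim_ext. 2: exact Hl.
    intros [a b]. simpl. apply (RInt_correct h a b). apply (h_ex h S hc h0 hS).
  - destruct (Rle_dec l (4 * S)) as [ok|ko]. auto. exfalso.
    assert (He : 0 < l - 4 * S) by lra.
    pose proof (proj1 (filterlim_locally _ _) Hl (mkposreal _ He)) as Hev.
    destruct Hev as [Q R [M1 HQ] [M2 HR] HP].
    set (a := Rmin M1 0 - 1). set (b := Rmax M2 0 + 1).
    assert (Qa : Q a) by (apply HQ; unfold a; pose proof (Rmin_l M1 0); lra).
    assert (Rb : R b) by (apply HR; unfold b; pose proof (Rmax_l M2 0); lra).
    pose proof (HP a b Qa Rb) as Hab. change (Rabs (RInt h a b - l) < l - 4 * S) in Hab.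
    pose proof ((mid_bound h S hc h0 hS) a b ltac:(unfold a; pose proof (Rmin_r M1 0); lra)
        ltac:(unfold b; pose proof (Rmax_r M2 0); lra)).
    apply Rabs_def2 in Hab. lra.
Qed.



Lemma metric_quad {X} (d : X -> X -> R) a b c e : is_metric d ->
  Rabs (d a b - d c e) <= d a c + d b e.
Proof. intros [m1 [m2 [m3 m4]]]. apply Rabs_le. split.
  - pose proof (m4 c a e). pose proof (m4 a b e). rewrite (m3 c a) in H. lra.
  - pose proof (m4 a c b). pose proof (m4 c e b). rewrite (m3 e b) in H0. lra. Qed.

Lemma dist_cont {X} (d : X -> X -> R) g1 g2 x : is_metric d -> inSH d g1 -> inSH d g2 ->
  continuous (fun u => d (g1 u) (g2 u)) x.
Proof. intros HM H1 H2. apply lip_cont with 2. lra. intros y.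
  eapply Rle_trans. apply metric_quad; auto. rewrite H1, H2. lra. Qed.

Lemma distSH_le {X} (d : X -> X -> R) g1 g2 S : is_metric d -> inSH d g1 -> inSH d g2 ->
  (forall u, d (g1 u) (g2 u) * exp (- Rabs u) <= S * exp (- Rabs u / 2)) ->
  distSH d g1 g2 <= 2 * S.
Proof. intros HM H1 H2 HS.
  set (h := fun u => d (g1 u) (g2 u) * exp (- Rabs u)).
  assert (hc : forall u, continuous h u).
  { intros u. apply (continuous_mult (K := R_AbsRing) (fun u => d (g1 u) (g2 u)) (fun u => exp (- Rabs u))).
    apply dist_cont; auto. apply continuous_exp_comp.
    apply (continuous_opp (fun u => Rabs u)). apply continuous_Rabs. }
  assert (h0 : forall u, 0 <= h u).
  { intros u. unfold h. destruct HM as [m1 _]. pose proof (m1 (g1 u) (g2 u)). pose proof (exp_pos (- Rabs u)). nra. }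
  destruct (imp_exists h S hc h0 HS) as [l [Hl Hle]].
  unfold distSH. fold h. rewrite (is_RInt_gen_unique h l Hl). lra. Qed.

Lemma rpow_nonneg x a : 0 <= rpow x a.
Proof. unfold rpow. destruct (Rle_dec x 0). lra. unfold Rpower. left; apply exp_pos. Qed.

Lemma rpow_mono x y a : 0 < a -> x <= y -> rpow x a <= rpow y a.
Proof. intros Ha H. unfold rpow. destruct (Rle_dec x 0); destruct (Rle_dec y 0).
  lra. unfold Rpower; left; apply exp_pos. lra. apply Rle_Rpower_l; lra. Qed.

Lemma rpow_small a eps : 0 < a -> 0 < eps -> exists delta, 0 < delta /\
  forall x, x < delta -> rpow x a < eps.
Proof. intros Ha He. exists (Rpower eps (/ a)). split. unfold Rpower; apply exp_pos.
  intros x Hx. unfold rpow. destruct (Rle_dec x 0). lra.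
  apply Rlt_le_trans with (Rpower (Rpower eps (/ a)) a).
  apply Rlt_Rpower_l; lra. rewrite Rpower_mult. replace (/ a * a) with 1 by (field; lra).
  rewrite Rpower_1; lra. Qed.

Lemma rpow_exp a C y : 0 < C -> rpow (C * exp y) a = Rpower C a * exp (a * y).
Proof. intros HC. unfold rpow. destruct (Rle_dec (C * exp y) 0).
  pose proof (exp_pos y). nra. unfold Rpower. rewrite ln_mult, ln_exp by (auto; apply exp_pos).
  rewrite <- exp_plus. f_equal. ring. Qed.

Lemma inSH_flow {X} (d : X -> X -> R) t g : inSH d g -> inSH d (gflow t g).
Proof. intros H s u. unfold gflow. rewrite H. f_equal. ring. Qed.

Lemma gflow_comp {X} s c (g : R -> X) : gflow (s + c) g = gflow s (gflow c g).
Proof. unfold gflow. apply functional_extensionality. intros u. f_equal. ring. Qed.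

Lemma flow_dist {X} (d : X -> X -> R) g t t' : is_metric d -> inSH d g ->
  distSH d (gflow t g) (gflow t' g) <= 2 * Rabs (t - t').
Proof. intros HM Hg. apply distSH_le; auto using inSH_flow.
  intros u. unfold gflow. rewrite Hg. replace (u + t - (u + t')) with (t - t') by ring.
  apply Rmult_le_compat_l. apply Rabs_pos.
  destruct (Req_dec (Rabs u) 0). rewrite H. replace (-0/2) with (-0) by field. lra.
  left; apply exp_increasing. pose proof (Rabs_pos u). lra. Qed.

Lemma flow_cont {X} (d : X -> X -> R) (Phi : (R -> X) -> R) a L g t :
  is_metric d -> 0 < a -> 0 <= L -> holder_SH d Phi a L -> inSH d g ->
  continuous (fun s => Phi (gflow s g)) t.
Proof. intros HM Ha HL Hh Hg. apply filterlim_locally. intros eps.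
  assert (He : 0 < eps / (L + 1)) by (apply Rdiv_lt_0_compat; [apply cond_pos | lra]).
  destruct (rpow_small a _ Ha He) as [dl [Hdl Hr]].
  assert (Hd2 : 0 < dl / 2) by lra.
  exists (mkposreal _ Hd2). intros y Hy. change (Rabs (y - t) < dl / 2) in Hy.
  change (Rabs (Phi (gflow y g) - Phi (gflow t g)) < eps).
  eapply Rle_lt_trans. apply Hh; apply inSH_flow; auto.
  pose proof (flow_dist d g y t HM Hg).
  assert (rpow (distSH d (gflow y g) (gflow t g)) a < eps / (L + 1)) by (apply Hr; lra).
  pose proof (rpow_nonneg (distSH d (gflow y g) (gflow t g)) a). pose proof (cond_pos eps).
  apply Rle_lt_trans with (L * (eps / (L + 1))). apply Rmult_le_compat_l; lra.
  apply Rmult_lt_reg_r with (L + 1). lra.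
  replace (L * (eps / (L + 1)) * (L + 1)) with (L * eps) by (field; lra). nra. Qed.

Lemma flow_ex {X} (d : X -> X -> R) (Phi : (R -> X) -> R) a L g x y :
  is_metric d -> 0 < a -> 0 <= L -> holder_SH d Phi a L -> inSH d g ->
  ex_RInt (fun s => Phi (gflow s g)) x y.
Proof. intros. apply (@ex_RInt_continuous R_CompleteNormedModule). intros. eapply flow_cont; eauto. Qed.

Lemma RInt_bound_L (f : R -> R) L x y : (forall t, continuous f t) -> (forall t, Rabs (f t) <= L) ->
  Rabs (RInt f x y) <= L * Rabs (y - x).
Proof. intros Hc Hb.
  assert (E : forall a b, ex_RInt f a b) by (intros; apply (@ex_RInt_continuous R_CompleteNormedModule); auto).
  destruct (Rle_dec x y).
  - rewrite (Rabs_right (y - x)) by lra. rewrite Rmult_comm. apply abs_RInt_le_const; auto.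
  - rewrite <- opp_RInt_swap by auto. unfold opp; simpl. rewrite Rabs_Ropp.
    rewrite (Rabs_left (y - x)) by lra. replace (- (y - x)) with (x - y) by ring. rewrite Rmult_comm.
    apply abs_RInt_le_const; auto. lra. Qed.

Definition Kr (r : R) := 2 * r + 4 + 4 * r * exp (r / 2) + Cg r * exp (r / 2).

Lemma mix A B e1 e2 : 0<=A -> 0<=B -> 0<=e1 -> 0<=e2 ->
  A*e1 <= (A+B)*(e1+e2) /\ A*e2 <= (A+B)*(e1+e2).
Proof. intros. split; nra. Qed.

Lemma Kr_split r Y : Kr r = Y + (Kr r - Y).
Proof. ring. Qed.

Lemma lin_exp r w : 0 <= r -> 0 <= w -> 2 * r + 2 * w <= (2 * r + 4) * exp (w / 2).
Proof. intros. pose proof (exp_ineq1_le (w / 2)). nra. Qed.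

Lemma seg_of_SH {X} (d : X -> X -> R) g T : 0 <= T -> inSH d g -> geod_seg d g (g 0) (g T).
Proof. intros HT H. assert (E : d (g 0) (g T) = T) by (rewrite H; rewrite Rabs_left1; lra).
  unfold geod_seg. rewrite E. split; [auto | split; [auto | intros; apply H]]. Qed.

Lemma dom {X} (d : X -> X -> R) (HC : CAT_m1 d) e1 e2 T1 T2 r :
  inSH d e1 -> inSH d e2 -> 0 <= T1 -> 0 <= T2 -> 0 <= r ->
  d (e1 0) (e2 0) <= r -> d (e1 T1) (e2 T2) <= r ->
  exists c, Rabs c <= r /\ Rabs (T2 - c - T1) <= r /\
    forall v, d (e1 v) (e2 (v + c)) <= Kr r * (exp (- v / 2) + exp ((v - T1) / 2)).
Proof.
  intros H1 H2 HT1 HT2 Hr Hp Hq.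
  pose proof HC as [HM [HG _]]. pose proof HM as [m1 [m2 [m3 m4]]].
  set (p1 := e1 0) in *. set (q1 := e1 T1) in *. set (p2 := e2 0) in *. set (q2 := e2 T2) in *.
  destruct (HG p1 q2) as [z Gz].
  set (T3 := d p1 q2).
  assert (dT1 : d p1 q1 = T1) by (unfold p1, q1; rewrite H1; rewrite Rabs_left1; lra).
  assert (dT2 : d p2 q2 = T2) by (unfold p2, q2; rewrite H2; rewrite Rabs_left1; lra).
  assert (HT3a : Rabs (T2 - T3) <= r).
  { rewrite <- dT2. unfold T3. apply Rabs_le. pose proof (m4 p1 p2 q2). pose proof (m4 p2 p1 q2).
    rewrite (m3 p2 p1) in H0. lra. }
  assert (HT3b : Rabs (T3 - T1) <= r).
  { rewrite <- dT1. unfold T3. apply Rabs_le. pose proof (m4 p1 q1 q2). pose proof (m4 p1 q2 q1).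
    rewrite (m3 q2 q1) in H0. lra. }
  exists (T2 - T3). split. auto. split. replace (T2 - (T2 - T3) - T1) with (T3 - T1) by ring. auto.
  intros v.
  set (c := T2 - T3).
  pose proof (exp_pos (- v / 2)) as E1. pose proof (exp_pos ((v - T1) / 2)) as E2.
  pose proof (exp_pos (r / 2)) as E3. pose proof (Cg_nonneg r) as E4.
  assert (crude1 : d (e1 v) (e2 (v + c)) <= 2 * r + 2 * Rabs v).
  { eapply Rle_trans. apply (m4 _ p1). eapply Rle_trans. apply Rplus_le_compat_l. apply (m4 _ p2).
    unfold p1, p2 in *. rewrite H1, H2. unfold c.
    pose proof (Rabs_triang v (T2 - T3)). replace (0 - (v + (T2 - T3))) with (- (v + (T2 - T3))) by ring.
    rewrite Rabs_Ropp. replace (v - 0) with v by ring. lra. }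
  assert (crude2 : d (e1 v) (e2 (v + c)) <= 2 * r + 2 * Rabs (v - T1)).
  { eapply Rle_trans. apply (m4 _ q1). eapply Rle_trans. apply Rplus_le_compat_l. apply (m4 _ q2).
    unfold q1, q2 in *. rewrite H1, H2. unfold c.
    replace (T2 - (v + (T2 - T3))) with ((T3 - T1) - (v - T1)) by ring.
    pose proof (Rabs_triang (T3 - T1) (- (v - T1))) as H. rewrite Rabs_Ropp in H.
    replace (T3 - T1 + - (v - T1)) with (T3 - T1 - (v - T1)) in H by ring. lra. }
  assert (K1 : (2 * r + 4) * (exp (- v / 2) + exp ((v - T1) / 2)) <= Kr r * (exp (- v / 2) + exp ((v - T1) / 2))).
  { apply Rmult_le_compat_r. lra. unfold Kr. nra. }
  destruct (Rle_dec v 0) as [Hv0|Hv0].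
  { eapply Rle_trans. apply crude1. eapply Rle_trans. 2: apply K1.
    rewrite Rabs_left1 by lra. pose proof (lin_exp r (- v) Hr ltac:(lra)).
    replace (- v / 2) with ((- v) / 2) by field. nra. }
  destruct (Rle_dec T1 v) as [Hv1|Hv1].
  { eapply Rle_trans. apply crude2. eapply Rle_trans. 2: apply K1.
    rewrite Rabs_right by lra. pose proof (lin_exp r (v - T1) Hr ltac:(lra)). nra. }
  destruct (Rle_dec v T3) as [Hv3|Hv3].
  2:{ eapply Rle_trans. apply crude2. rewrite Rabs_left1 by lra.
      assert (exp (- r / 2) <= exp ((v - T1) / 2)).
      { destruct (Req_dec (- r / 2) ((v - T1) / 2)). rewrite H; lra.
        left; apply exp_increasing. apply Rabs_le_between in HT3b. lra. }
      assert (exp (r / 2) * exp (- r / 2) = 1) by (rewrite <- exp_plus; replace (r / 2 + - r / 2) with 0 by field; apply exp_0).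
      assert (1 <= exp (r / 2) * exp ((v - T1) / 2)) by nra.
      assert (4 * r <= 4 * r * exp (r / 2) * exp ((v - T1) / 2)).
      { replace (4 * r * exp (r / 2) * exp ((v - T1) / 2)) with (4 * r * (exp (r / 2) * exp ((v - T1) / 2))) by ring. nra. }
      assert (4 * r * exp (r / 2) * exp ((v - T1) / 2) <= Kr r * (exp (- v / 2) + exp ((v - T1) / 2))).
      { rewrite (Kr_split r (4 * r * exp (r / 2))). unfold Kr.
        replace (2 * r + 4 + 4 * r * exp (r / 2) + Cg r * exp (r / 2) - 4 * r * exp (r / 2)) with
          (2 * r + 4 + Cg r * exp (r / 2)) by ring.
        refine (proj1 (mix _ _ _ _ _ _ _ _)) || refine (proj2 (mix _ _ _ _ _ _ _ _)); nra. }
      apply Rabs_le_between in HT3b. lra. }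
  destruct (Rle_dec (T3 - T2) v) as [Hv2|Hv2].
  2:{ eapply Rle_trans. apply crude1. rewrite Rabs_right by lra.
      assert (exp (- r / 2) <= exp (- v / 2)).
      { destruct (Req_dec (- r / 2) (- v / 2)). rewrite H; lra.
        left; apply exp_increasing. apply Rabs_le_between in HT3a. lra. }
      assert (exp (r / 2) * exp (- r / 2) = 1) by (rewrite <- exp_plus; replace (r / 2 + - r / 2) with 0 by field; apply exp_0).
      assert (1 <= exp (r / 2) * exp (- v / 2)) by nra.
      assert (4 * r <= 4 * r * exp (r / 2) * exp (- v / 2)).
      { replace (4 * r * exp (r / 2) * exp (- v / 2)) with (4 * r * (exp (r / 2) * exp (- v / 2))) by ring. nra. }
      assert (4 * r * exp (r / 2) * exp (- v / 2) <= Kr r * (exp (- v / 2) + exp ((v - T1) / 2))).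
      { rewrite (Kr_split r (4 * r * exp (r / 2))). unfold Kr.
        replace (2 * r + 4 + 4 * r * exp (r / 2) + Cg r * exp (r / 2) - 4 * r * exp (r / 2)) with
          (2 * r + 4 + Cg r * exp (r / 2)) by ring.
        refine (proj1 (mix _ _ _ _ _ _ _ _)) || refine (proj2 (mix _ _ _ _ _ _ _ _)); nra. }
      apply Rabs_le_between in HT3a. lra. }
  assert (S1 : geod_seg d e1 p1 q1). { pose proof (seg_of_SH d e1 T1 HT1 H1). auto. }
  pose proof (GL d HC p1 q1 q2 e1 z r v S1 Gz Hq ltac:(lra) ltac:(lra) ltac:(unfold T3 in Hv3; lra)) as A1.
  rewrite dT1 in A1. fold T3 in A1.
  assert (S2 : geod_seg d e2 p2 q2). { pose proof (seg_of_SH d e2 T2 HT2 H2). auto. }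
  pose proof (seg_rev d e2 p2 q2 HM S2) as R2. rewrite dT2 in R2.
  pose proof (seg_rev d z p1 q2 HM Gz) as R1. fold T3 in R1.
  assert (dq2p1 : d q2 p1 = T3) by (unfold T3; apply m3).
  assert (dq2p2 : d q2 p2 = T2) by (rewrite m3; auto).
  assert (Hpp : d p1 p2 <= r) by auto.
  pose proof (GL d HC q2 p1 p2 _ _ r (T3 - v) R1 R2 Hpp ltac:(lra) ltac:(lra) ltac:(lra)) as A2.
  rewrite dq2p1, dq2p2 in A2.
  replace (T3 - (T3 - v)) with v in A2 by ring.
  replace (T2 - (T3 - v)) with (v + c) in A2 by (unfold c; ring).
  assert (B1 : exp (v - (T1 + T3) / 2) <= exp (r / 2) * exp ((v - T1) / 2)).
  { rewrite <- exp_plus. destruct (Req_dec (v - (T1 + T3) / 2) (r / 2 + (v - T1) / 2)). rewrite H; lra.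
    left; apply exp_increasing. apply Rabs_le_between in HT3b. lra. }
  assert (B2 : exp (T3 - v - (T3 + T2) / 2) <= exp (r / 2) * exp (- v / 2)).
  { rewrite <- exp_plus. destruct (Req_dec (T3 - v - (T3 + T2) / 2) (r / 2 + - v / 2)). rewrite H; lra.
    left; apply exp_increasing. apply Rabs_le_between in HT3a. lra. }
  eapply Rle_trans. apply (m4 _ (z v)).
  assert (Cg r * exp (r / 2) * (exp (- v / 2) + exp ((v - T1) / 2)) <= Kr r * (exp (- v / 2) + exp ((v - T1) / 2))).
  { apply Rmult_le_compat_r. lra. unfold Kr. pose proof (exp_pos (r/2)). nra. }
  assert (Cg r * exp (v - (T1 + T3) / 2) <= Cg r * (exp (r / 2) * exp ((v - T1) / 2)))
    by (apply Rmult_le_compat_l; lra).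
  assert (Cg r * exp (T3 - v - (T3 + T2) / 2) <= Cg r * (exp (r / 2) * exp (- v / 2)))
    by (apply Rmult_le_compat_l; lra).
  assert (Cg r * (exp (r / 2) * exp ((v - T1) / 2)) + Cg r * (exp (r / 2) * exp (- v / 2)) =
     Cg r * exp (r / 2) * (exp (- v / 2) + exp ((v - T1) / 2))) by ring.
  lra.
Qed.

Definition Dfun a L r := 4 * (L * Rpower (4 * Kr r) a) / a + 2 * r * L.

Lemma Kr_pos r : 0 <= r -> 4 <= Kr r.
Proof. intros. unfold Kr. pose proof (exp_pos (r/2)). pose proof (Cg_nonneg r). nra. Qed.

Lemma exp_w1 y u : exp (y - u / 2) * exp (- Rabs u) <= exp y * exp (- Rabs u / 2).
Proof. rewrite <- !exp_plus. destruct (Req_dec (y - u / 2 + - Rabs u) (y + - Rabs u / 2)) as [e|e].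
  rewrite e; lra. left; apply exp_increasing. pose proof (Rle_abs (-u)). rewrite Rabs_Ropp in H. lra. Qed.
Lemma exp_w2 y u : exp (y + u / 2) * exp (- Rabs u) <= exp y * exp (- Rabs u / 2).
Proof. rewrite <- !exp_plus. destruct (Req_dec (y + u / 2 + - Rabs u) (y + - Rabs u / 2)) as [e|e].
  rewrite e; lra. left; apply exp_increasing. pose proof (Rle_abs u). lra. Qed.

Lemma is_RInt_bnd a B T1 : 0 < a ->
  is_RInt (fun s => B * exp (a * (- s / 2)) + B * exp (a * ((s - T1) / 2))) 0 T1
    (2 * B / a * (1 - exp (a * (- T1 / 2))) + 2 * B / a * (1 - exp (a * (- T1 / 2)))).
Proof. intros Ha.
  pose proof (is_RInt_derive (fun s => - (2 * B / a) * exp (a * (- s / 2)) + 2 * B / a * exp (a * ((s - T1) / 2)))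
    (fun s => B * exp (a * (- s / 2)) + B * exp (a * ((s - T1) / 2))) 0 T1) as H.
  match goal with |- is_RInt _ _ _ ?v => replace v with
   (minus (- (2 * B / a) * exp (a * (- T1 / 2)) + 2 * B / a * exp (a * ((T1 - T1) / 2)))
          (- (2 * B / a) * exp (a * (- 0 / 2)) + 2 * B / a * exp (a * ((0 - T1) / 2)))) end.
  apply H.
  - intros u _. auto_derive. auto. unfold Rdiv, Rminus. field. lra.
  - intros u _. apply (ex_derive_continuous (fun s => B * exp (a * (- s / 2)) + B * exp (a * ((s - T1) / 2)))).
    auto_derive. auto.
  - unfold minus, plus, opp; simpl.
    replace (a * ((T1 - T1) / 2)) with 0 by field. replace (a * (- 0 / 2)) with 0 by field.
    replace (a * ((0 - T1) / 2)) with (a * (- T1 / 2)) by field. rewrite exp_0. field. lra.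
Qed.

Lemma pt_bound {X} (d : X -> X -> R) (Phi : (R -> X) -> R) (HM : is_metric d) a L K T1 e1 e2 s :
  0 < a -> 0 < K -> 0 <= L -> holder_SH d Phi a L -> inSH d e1 -> inSH d e2 ->
  (forall v, d (e1 v) (e2 v) <= K * (exp (- v / 2) + exp ((v - T1) / 2))) ->
  Rabs (Phi (gflow s e1) - Phi (gflow s e2)) <=
    L * Rpower (4 * K) a * exp (a * (- s / 2)) + L * Rpower (4 * K) a * exp (a * ((s - T1) / 2)).
Proof. intros Ha HK HL Hh H1 H2 Hd.
  eapply Rle_trans. apply Hh; apply inSH_flow; auto.
  set (Ss := K * (exp (- s / 2) + exp ((s - T1) / 2))).
  assert (D1 : distSH d (gflow s e1) (gflow s e2) <= 2 * Ss).
  { apply distSH_le; auto using inSH_flow. intros u. unfold gflow.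
    eapply Rle_trans. apply Rmult_le_compat_r. left; apply exp_pos. apply Hd.
    pose proof (exp_w1 (- s / 2) u). pose proof (exp_w2 ((s - T1) / 2) u).
    replace (- (u + s) / 2) with (- s / 2 - u / 2) by field.
    replace ((u + s - T1) / 2) with ((s - T1) / 2 + u / 2) by field.
    unfold Ss. nra. }
  set (m := Rmax (- s / 2) ((s - T1) / 2)).
  assert (D2 : 2 * Ss <= 4 * K * exp m).
  { unfold Ss, m. unfold Rmax. destruct (Rle_dec (- s / 2) ((s - T1) / 2)).
    - assert (exp (- s / 2) <= exp ((s - T1) / 2)).
      { destruct r. left; apply exp_increasing; auto. rewrite H; lra. } nra.
    - assert (exp ((s - T1) / 2) <= exp (- s / 2)).
      { left; apply exp_increasing; lra. } nra. }
  assert (D3 : rpow (distSH d (gflow s e1) (gflow s e2)) a <= Rpower (4 * K) a * exp (a * m)).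
  { rewrite <- rpow_exp by lra. apply rpow_mono; lra. }
  assert (D4 : exp (a * m) <= exp (a * (- s / 2)) + exp (a * ((s - T1) / 2))).
  { unfold m, Rmax. pose proof (exp_pos (a * (- s / 2))). pose proof (exp_pos (a * ((s - T1) / 2))).
    destruct (Rle_dec (- s / 2) ((s - T1) / 2)); lra. }
  assert (0 <= Rpower (4 * K) a) by (unfold Rpower; left; apply exp_pos).
  assert (Rpower (4 * K) a * exp (a * m) <= Rpower (4 * K) a * (exp (a * (- s / 2)) + exp (a * ((s - T1) / 2))))
    by (apply Rmult_le_compat_l; lra).
  assert (L * rpow (distSH d (gflow s e1) (gflow s e2)) a <= L * (Rpower (4 * K) a * (exp (a * (- s / 2)) + exp (a * ((s - T1) / 2)))))
    by (apply Rmult_le_compat_l; lra).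
  lra. Qed.

Lemma core {X} (d : X -> X -> R) (Phi : (R -> X) -> R) (HC : CAT_m1 d) a L
  (Ha : 0 < a <= 1) (Hh : holder_SH d Phi a L) (Hbd : forall g, inSH d g -> Rabs (Phi g) <= L)
  e1 e2 T1 T2 r :
  inSH d e1 -> inSH d e2 -> 0 <= T1 -> 0 <= T2 -> 0 <= r ->
  d (e1 0) (e2 0) <= r -> d (e1 T1) (e2 T2) <= r ->
  Rabs (RInt (fun s => Phi (gflow s e1)) 0 T1 - RInt (fun s => Phi (gflow s e2)) 0 T2) <= Dfun a L r.
Proof.
  intros H1 H2 HT1 HT2 Hr Hp Hq.
  pose proof HC as [HM _].
  assert (HL : 0 <= L) by (pose proof (Hbd e1 H1); pose proof (Rabs_pos (Phi e1)); lra).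
  destruct (dom d HC e1 e2 T1 T2 r H1 H2 HT1 HT2 Hr Hp Hq) as [c [Hc [HT Hdom]]].
  set (e2' := gflow c e2).
  assert (H2' : inSH d e2') by (apply inSH_flow; auto).
  set (f1 := fun s => Phi (gflow s e1)). set (f2 := fun s => Phi (gflow s e2)).
  set (g := fun s => Phi (gflow s e2')).
  assert (Ef1 : forall x y, ex_RInt f1 x y) by (intros; eapply flow_ex; eauto; lra).
  assert (Ef2 : forall x y, ex_RInt f2 x y) by (intros; eapply flow_ex; eauto; lra).
  assert (Eg : forall x y, ex_RInt g x y) by (intros; eapply flow_ex; eauto; lra).
  assert (Cg' : forall t, continuous g t) by (intros; eapply flow_cont; eauto; lra).
  assert (Cf1 : forall t, continuous f1 t) by (intros; eapply flow_cont; eauto; lra).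
  set (T3 := T2 - c).
  assert (S1 : RInt f2 0 T2 = RInt g (- c) T3).
  { pose proof (RInt_comp_lin f2 1 c (- c) T3) as E.
    replace (1 * - c + c) with 0 in E by ring. replace (1 * T3 + c) with T2 in E by (unfold T3; ring).
    rewrite <- E by auto. apply RInt_ext. intros x _. unfold g, f2, e2'.
    rewrite <- gflow_comp. unfold scal; simpl. unfold mult; simpl. rewrite !Rmult_1_l. reflexivity. }
  assert (S2 : RInt g (- c) T3 = RInt g (- c) 0 + (RInt g 0 T1 + RInt g T1 T3)).
  { rewrite <- (RInt_Chasles g (-c) 0 T3) by auto. rewrite <- (RInt_Chasles g 0 T1 T3) by auto. reflexivity. }
  assert (B1 : Rabs (RInt g (- c) 0) <= L * r).
  { eapply Rle_trans. apply RInt_bound_L; auto. intros; apply Hbd; apply inSH_flow; auto.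
    replace (0 - - c) with c by ring. apply Rmult_le_compat_l; lra. }
  assert (B2 : Rabs (RInt g T1 T3) <= L * r).
  { eapply Rle_trans. apply RInt_bound_L; auto. intros; apply Hbd; apply inSH_flow; auto.
    apply Rmult_le_compat_l; auto. }
  set (K := Kr r). assert (HK : 4 <= K) by (apply Kr_pos; auto).
  set (B := L * Rpower (4 * K) a).
  assert (Hdom' : forall v, d (e1 v) (e2' v) <= K * (exp (- v / 2) + exp ((v - T1) / 2))).
  { intros v. unfold e2', gflow. apply Hdom. }
  assert (B3 : Rabs (RInt f1 0 T1 - RInt g 0 T1) <= 4 * B / a).
  { assert (E : RInt f1 0 T1 - RInt g 0 T1 = RInt (fun x => minus (f1 x) (g x)) 0 T1)
      by (exact (eq_sym (RInt_minus (V := R_CompleteNormedModule) f1 g 0 T1 (Ef1 0 T1) (Eg 0 T1)))).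
    rewrite E. eapply Rle_trans. apply abs_RInt_le. auto.
    apply (@ex_RInt_continuous R_CompleteNormedModule). intros.
    apply (continuous_minus (V := R_NormedModule) f1 g); auto.
    apply Rle_trans with (RInt (fun s => B * exp (a * (- s / 2)) + B * exp (a * ((s - T1) / 2))) 0 T1).
    apply RInt_le. auto.
    apply (@ex_RInt_continuous R_CompleteNormedModule). intros.
    apply (continuous_Rabs_comp (fun x => minus (f1 x) (g x))).
    apply (continuous_minus (V := R_NormedModule) f1 g); auto.
    eexists; apply is_RInt_bnd; lra.
    intros s _. unfold B. apply (pt_bound d Phi HM a L K T1 e1 e2' s); auto; lra.
    rewrite (is_RInt_unique _ _ _ _ (is_RInt_bnd a B T1 (proj1 Ha))).
    pose proof (exp_pos (a * (- T1 / 2))). assert (0 <= B) by (unfold B, Rpower; pose proof (exp_pos (a * ln (4 * K))); nra).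
    assert (0 <= 2 * B / a) by (apply Rle_mult_inv_pos; lra).
    replace (4 * B / a) with (2 * B / a + 2 * B / a) by (field; lra).
    nra. }
  fold f1 f2. rewrite S1, S2. unfold Dfun. fold K. fold B.
  assert (Rabs (T3 - T1) <= r) by (unfold T3; auto).
  replace (RInt f1 0 T1 - (RInt g (- c) 0 + (RInt g 0 T1 + RInt g T1 T3))) with
    ((RInt f1 0 T1 - RInt g 0 T1) - RInt g (- c) 0 - RInt g T1 T3) by ring.
  eapply Rle_trans. apply Rabs_triang. eapply Rle_trans. apply Rplus_le_compat_r. apply Rabs_triang.
  rewrite !Rabs_Ropp. lra.
Qed.

Lemma dPhi_eq {X} (d : X -> X -> R) Phi p q : is_metric d ->
  dPhi d Phi p q = RInt (fun t => Phi (gflow t (gamma_pq d p q))) 0 (d p q).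
Proof. intros [m1 [m2 _]]. unfold dPhi. destruct (excluded_middle_informative (p = q)) as [e|e].
  subst. assert (d q q = 0) by (apply m2; auto). rewrite H. rewrite RInt_point. reflexivity.
  reflexivity. Qed.

Lemma gamma_spec {X} (d : X -> X -> R) g t : inSH d g ->
  inSH d (gamma_pq d (g 0) (g t)) /\ gamma_pq d (g 0) (g t) 0 = g 0 /\
  gamma_pq d (g 0) (g t) (d (g 0) (g t)) = g t.
Proof. intros Hg. unfold gamma_pq. apply epsilon_spec.
  rewrite Hg. destruct (Rle_dec 0 t).
  - exists g. split; auto. split; auto. f_equal. rewrite Rabs_left1 by lra. ring.
  - exists (flip g). split. intros s u. unfold flip. rewrite Hg.
    replace (- s - - u) with (- (s - u)) by ring. apply Rabs_Ropp.
    unfold flip. split. rewrite Ropp_0. auto. f_equal. rewrite Rabs_right by lra. ring.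
Qed.

Theorem corollary4p5 (X : Type) (d : X -> X -> R)
  (HCAT : CAT_m1 d) (Hext : geodesically_complete d)
  (Phi : (R -> X) -> R) (L : R)
  (HPhi : in_calH d Phi)
  (Hhol : exists a, 0 < a <= 1 /\ holder_SH d Phi a L)
  (Hholhat : exists b, 0 < b <= 1 /\ holder_SH d (hatPhi Phi) b L)
  (Hbd : forall g, inSH d g -> Rabs (Phi g) <= L) :
  exists D : R -> R,
    forall (g1 g2 : R -> X), inSH d g1 -> inSH d g2 ->
    forall (r t1 t2 : R), 0 <= r ->
      d (g1 0) (g2 0) <= r -> d (g1 t1) (g2 t2) <= r ->
      Rabs (dPhi d Phi (g1 0) (g1 t1) - dPhi d Phi (g2 0) (g2 t2)) <= D r.
Proof.
  destruct Hhol as [a [Ha Hh]]. pose proof HCAT as [HM _].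
  exists (Dfun a L). intros g1 g2 G1 G2 r t1 t2 Hr H0 H1.
  rewrite !dPhi_eq by auto.
  destruct (gamma_spec d g1 t1 G1) as [I1 [A1 B1]].
  destruct (gamma_spec d g2 t2 G2) as [I2 [A2 B2]].
  destruct HM as [m1 _].
  apply (core d Phi HCAT a L Ha Hh Hbd); auto.
  - rewrite A1, A2. auto.
  - rewrite B1, B2. auto.
Qed.
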